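(* Let $G$ be a finite group with identity $e$ and $H$ a normal subgroup of $G$. Then the extended subgroup sum graph $\Gamma^+_{G,H}$ admits a perfect code if and only if either $H\in\{\{e\},G\}$ or $G^2\subseteq H$, where $G^2=\{g^2:g\in G\}$.
   Context: For a normal subgroup $H$ of a finite group $G$, the extended subgroup sum graph $\Gamma^+_{G,H}$ is the simple undirected graph with vertex set $G$ in which distinct vertices $x,y$ are adjacent if and only if $xy\in H$. A perfect code in a graph is a set $C$ of vertices that is independent and such that every vertex not in $C$ is adjacent to exactly one vertex of $C$. *)

(* Defs.v *)
From mathcomp Require Import all_boot all_fingroup.
Set Implicit Arguments. Unset Strict Implicit. Unset Printing Implicit Defensive.
Local Open Scope group_scope.

(* Extended subgroup sum graph Gamma^+_{G,H}: vertex set G (all elements of gT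
   lying in G), distinct x y adjacent iff x * y \in H. *)
Definition ess_adj (gT : finGroupType) (H : {set gT}) (x y : gT) : bool :=
  (x != y) && (x * y \in H).

Definition ess_perfect_code (gT : finGroupType) (G H C : {set gT}) : Prop :=
  [/\ C \subset G,
      {in C &, forall x y, ~~ ess_adj H x y} &
      {in G :\: C, forall x, #|[set c in C | ess_adj H x c]| = 1%N}].

Definition squares (gT : finGroupType) (G : {set gT}) : {set gT} :=
  [set g ^+ 2 | g in G].

(* Main.v *)
Require Import Defs.
From mathcomp Require Import all_boot all_fingroup.
Local Open Scope group_scope.

Section Aux.
Variables (gT : finGroupType) (G H : {group gT}).
Hypothesis nHG : H <| G.

Lemma inN u : u \in G -> u \in 'N(H).
Proof. by move=> uG; apply: (subsetP (normal_norm nHG)). Qed.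

Lemma mulH u v : u \in G -> v \in G ->
  (u * v \in H) = (coset H u * coset H v == 1).
Proof.
move=> uG vG; rewrite -morphM ?inN //.
apply/idP/eqP; first exact: coset_id.
by apply: coset_idr; rewrite groupM ?inN.
Qed.

Lemma sq_neq (X : coset_of H) : X * X != 1 -> X != X^-1.
Proof.
move=> XX; apply: contra XX => /eqP E.
by rewrite {2}E mulgV.
Qed.

Lemma keyL C (h x : gT) : ess_perfect_code G H C -> h \in H -> h != 1 ->
  x \in G -> coset H x * coset H x != 1 ->
  forall c, c \in C -> coset H c != coset H x.
Proof.
case=> sCG indC cnt hH h1 xG XX c cC; apply/negP => /eqP fc.
have cG : c \in G := subsetP sCG c cC.
have hG : h \in G := subsetP (normal_sub nHG) h hH.
have bG : x^-1 \in G by rewrite groupV.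
have fb : coset H x^-1 = (coset H x)^-1 by rewrite morphV ?inN.
have XnX := sq_neq _ XX.
have adjcb : ess_adj H c x^-1.
  rewrite /ess_adj mulH // fc fb mulgV eqxx andbT.
  by apply: contra XnX => /eqP E; rewrite -fb -fc E.
have bC : x^-1 \notin C by apply/negP => bC; move: (indC _ _ cC bC); rewrite adjcb.
have bD : x^-1 \in G :\: C by rewrite inE bC bG.
have Sb := cnt x^-1 bD.
have adjb y : y \in G -> coset H y = coset H x -> ess_adj H x^-1 y.
  move=> yG fy; rewrite /ess_adj mulH // fy fb mulVg eqxx andbT.
  apply/negP => /eqP E; case/negP: XnX; by rewrite -fb E fy.
set a := c * h.
have aG : a \in G by rewrite groupM.
have fa : coset H a = coset H x.
  by rewrite morphM ?inN // /= (coset_id hH) mulg1.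
have ac : a != c.
  by apply: contra h1 => /eqP E; rewrite -(mulKg c h) -/a E mulVg.
have aC : a \notin C.
  apply/negP => aC.
  have : #|[set c; a]| <= #|[set y in C | ess_adj H x^-1 y]|.
    apply: subset_leq_card; apply/subsetP => y; rewrite !inE => /orP [] /eqP ->.
      by rewrite cC adjb.
    by rewrite aC adjb.
  by rewrite Sb cards2 eq_sym ac.
have := cnt a; rewrite inE aC aG => /(_ isT) Sa.
have /card_gt0P [y] : 0 < #|[set y in C | ess_adj H a y]| by rewrite Sa.
rewrite inE => /andP [yC /andP [_]].
have yG : y \in G := subsetP sCG y yC.
rewrite mulH // fa => /eqP fy.
have fy' : coset H y = (coset H x)^-1 by rewrite -(mulKg (coset H x) (coset H y)) fy mulg1.
move: (indC _ _ cC yC); rewrite /ess_adj mulH // fc fy' mulgV eqxx andbT.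
move=> /negPn /eqP E; case/negP: XnX; by rewrite -fy' -E fc.
Qed.

Lemma crep (z : gT) : coset H (repr (coset H z)) = coset H z.
Proof. exact: coset_mem (mem_repr_coset _). Qed.

End Aux.
Arguments inN {gT G H} nHG {u}.
Arguments keyL {gT G H} nHG {C h x}.
Arguments mulH {gT G H} nHG {u v}.

Theorem theorem6p1 (gT : finGroupType) (G H : {group gT}) :
  H <| G ->
  (exists C : {set gT}, ess_perfect_code G H C) <->
  ((H :==: 1) || (H :==: G) \/ squares G \subset H).
Proof.
move=> nHG; split.
  case=> C PC.
  case: (boolP (H :==: 1)) => [H1 | H1]; first by left; apply/orP; left.
  right; apply/subsetP => _ /imsetP [x xG ->].
  have [h hH h1] : exists2 h, h \in H & h != 1.
    exact/trivgPn.
  have sCG : C \subset G by case: PC.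
  have xN := inN nHG xG.
  rewrite expgS expg1 (mulH nHG) //; apply/negPn/negP => XX.
  have bG : x^-1 \in G by rewrite groupV.
  have fb : coset H x^-1 = (coset H x)^-1 by rewrite morphV.
  have XX' : coset H x^-1 * coset H x^-1 != 1.
    by rewrite fb -invMg invg_eq1.
  have xC : x \notin C.
    by apply/negP => xC; move: (keyL nHG PC hH h1 xG XX _ xC); rewrite eqxx.
  case: PC => _ indC cnt.
  have := cnt x; rewrite inE xC xG => /(_ isT) Sx.
  have /card_gt0P [y] : 0 < #|[set y in C | ess_adj H x y]| by rewrite Sx.
  rewrite inE => /andP [yC /andP [_]].
  have yG : y \in G := subsetP sCG y yC.
  rewrite (mulH nHG) // => /eqP fy.
  have fy' : coset H y = coset H x^-1 by rewrite fb -(mulKg (coset H x) (coset H y)) fy mulg1.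
  by move: (keyL nHG (And3 sCG indC cnt) hH h1 bG XX' _ yC); rewrite fy' eqxx.
suff Hsq : squares G \subset H -> exists C : {set gT}, ess_perfect_code G H C.
  case=> [/orP [/eqP H1 | /eqP HG] | ]; last exact: Hsq.
  - exists [set x in G | enum_rank x <= enum_rank x^-1]; split.
    + by apply/subsetP => x; rewrite inE => /andP [].
    + move=> x y; rewrite !inE => /andP [xG lx] /andP [yG ly].
      rewrite /ess_adj H1 inE; apply/negP => /andP [ne /eqP E].
      have ey : y = x^-1 by rewrite -(mulKg x y) E mulg1.
      move: ly; rewrite ey invgK => ly.
      have /enum_rank_inj E2 : enum_rank x = enum_rank x^-1.
        by apply: ord_inj; apply/eqP; rewrite eqn_leq lx ly.
      by move: ne; rewrite ey -E2 eqxx.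
    + move=> x; rewrite !inE negb_and => /andP [/orP [nx|lx] xG]; first by rewrite xG in nx.
      have -> : [set c in [set x0 in G | enum_rank x0 <= enum_rank x0^-1]
                 | ess_adj H x c] = [set x^-1].
        apply/setP => y; rewrite !inE /ess_adj H1 inE.
        apply/idP/idP.
          by case/andP => _ /andP [_ /eqP E]; rewrite -(mulKg x y) E mulg1.
        move=> /eqP ->; rewrite groupV xG invgK mulgV eqxx andbT /=.
        rewrite -ltnNge in lx; rewrite (ltnW lx) /=.
        by apply/negP => /eqP E; move: lx; rewrite -E ltnn.
      by rewrite cards1.
  - apply: Hsq; apply/subsetP => _ /imsetP [x xG ->]; by rewrite HG groupX.
move=> sq.
exists [set repr (coset H x) | x in G]; split.
- apply/subsetP => _ /imsetP [x xG ->].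
  have := mem_repr_coset (coset H x); rewrite val_coset ?(inN nHG) //.
  case/rcosetP => h hH ->; rewrite groupM //.
  exact: subsetP (normal_sub nHG) h hH.
- have key : forall u v, u \in G -> v \in G -> coset H u * coset H v = 1 ->
      coset H u = coset H v.
    move=> u v uG vG E.
    have : v ^+ 2 \in H by apply: (subsetP sq); apply/imsetP; exists v.
    rewrite expgS expg1 (mulH nHG) // => /eqP E2.
    by apply: (mulIg (coset H v)); rewrite E E2.
  move=> _ _ /imsetP [x xG ->] /imsetP [y yG ->].
  rewrite /ess_adj; apply/negP => /andP [ne].
  have rG : forall z, z \in G -> repr (coset H z) \in G.
    move=> z zG; have := mem_repr_coset (coset H z); rewrite val_coset ?(inN nHG) //.
    case/rcosetP => h hH ->; rewrite groupM //.
    exact: subsetP (normal_sub nHG) h hH.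
  rewrite (mulH nHG) ?rG // => /eqP E.
  have := key _ _ (rG _ xG) (rG _ yG) E; rewrite !crep => E'.
  by move: ne; rewrite E' eqxx.
- move=> x; rewrite inE => /andP [xC xG].
  have rG : forall z, z \in G -> repr (coset H z) \in G.
    move=> z zG; have := mem_repr_coset (coset H z); rewrite val_coset ?(inN nHG) //.
    case/rcosetP => h hH ->; rewrite groupM //.
    exact: subsetP (normal_sub nHG) h hH.
  have -> : [set c in [set repr (coset H x0) | x0 in G] | ess_adj H x c]
            = [set repr (coset H x)].
    apply/setP => y; rewrite !inE; apply/idP/idP.
      case/andP => /imsetP [z zG ->] /andP [_].
      rewrite (mulH nHG) ?rG // crep.
      have : x ^+ 2 \in H by apply: (subsetP sq); apply/imsetP; exists x.
      rewrite expgS expg1 (mulH nHG) // => /eqP E2 /eqP E.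
      by rewrite -(mulKg (coset H x) (coset H z)) E -E2 mulKg.
    move/eqP ->; rewrite (imset_f _ xG) /= /ess_adj.
    rewrite (mulH nHG) ?rG // crep.
    have : x ^+ 2 \in H by apply: (subsetP sq); apply/imsetP; exists x.
    rewrite expgS expg1 (mulH nHG) // => ->; rewrite andbT.
    by apply/negP => /eqP E; case/negP: xC; rewrite {1}E; apply/imsetP; exists x.
  by rewrite cards1.
Qed.
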